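(* Let $a,n\in\mathbb{N}$, $k_1,\ldots,k_n\in\mathbb{N}$, let $f_1,\ldots,f_n$, $g_1,\ldots,g_n$, $h_1,\ldots,h_n$ be arbitrary arithmetic functions, and let $\omega$ be a completely additive function. Writing in each summand $M=\operatorname{lcm}(d_1,\ldots,d_n)$ and $L=K/M$, we have $$U_{\omega}^{(a)}(k_1,\ldots,k_n)=\sum_{d_1|k_1,\ldots,d_n|k_n}\omega(M^a)\Bigl(\prod_{i=1}^n f_i(d_i)g_i\Bigl(\frac{k_i}{d_i}\Bigr)\Bigr)\sum_{\ell=1}^{L^a}\prod_{i=1}^n h_i\Bigl(\Bigl(\frac{M}{d_i}\Bigr)^a\ell\Bigr)+\sum_{d_1|k_1,\ldots,d_n|k_n}\Bigl(\prod_{i=1}^n f_i(d_i)g_i\Bigl(\frac{k_i}{d_i}\Bigr)\Bigr)\sum_{\ell=1}^{L^a}\omega(\ell)\prod_{i=1}^n h_i\Bigl(\Bigl(\frac{M}{d_i}\Bigr)^a\ell\Bigr).$$ If in addition $h_1,\ldots,h_n$ are completely multiplicative, then $$U_{\omega}^{(a)}(k_1,\ldots,k_n)=\sum_{d_1|k_1,\ldots,d_n|k_n}\omega(M^a)\Bigl(\prod_{i=1}^n f_i(d_i)g_i\Bigl(\frac{k_i}{d_i}\Bigr)h_i\Bigl(\frac{M}{d_i}\Bigr)^a\Bigr)\sum_{\ell=1}^{L^a}\prod_{i=1}^n h_i(\ell)+\sum_{d_1|k_1,\ldots,d_n|k_n}\Bigl(\prod_{i=1}^n f_i(d_i)g_i\Bigl(\frac{k_i}{d_i}\Bigr)h_i\Bigl(\frac{M}{d_i}\Bigr)^a\Bigr)\sum_{\ell=1}^{L^a}\omega(\ell)\prod_{i=1}^n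 h_i(\ell).$$
   Context: An arithmetic function is a map $\mathbb{N}\to\mathbb{C}$. $\omega$ is completely additive if $\omega(mn)=\omega(m)+\omega(n)$ for all $m,n\in\mathbb{N}$; $h$ is completely multiplicative if $h(1)=1$ and $h(mn)=h(m)h(n)$ for all $m,n$. For $a\in\mathbb{N}$ and arithmetic functions $f,g,h$, $s^{(a)}_{f,g,h}(k,j)=\sum_{d|k,\ d^a|j} f(d)\,g(k/d)\,h(j/d^a)$ for $k,j\in\mathbb{N}$. Given $k_1,\ldots,k_n$, $K=\operatorname{lcm}(k_1,\ldots,k_n)$ and $U_{\omega}^{(a)}(k_1,\ldots,k_n)=\sum_{j=1}^{K^a}\omega(j)\prod_{i=1}^n s^{(a)}_{f_i,g_i,h_i}(k_i,j)$. *)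

(* Defs.v *)
From HB Require Import structures.
From mathcomp Require Import all_boot all_order all_algebra all_field.
Set Implicit Arguments. Unset Strict Implicit. Unset Printing Implicit Defensive.
Import Order.TTheory GRing.Theory Num.Theory.
Local Open Scope ring_scope.

(* Arithmetic functions N -> C, modelled as nat -> algC (value at 0 irrelevant). *)
Definition arith := nat -> algC.

Definition completely_additive (w : arith) : Prop :=
  forall m n : nat, (0 < m)%N -> (0 < n)%N -> w (m * n)%N = w m + w n.

Definition completely_multiplicative (h : arith) : Prop :=
  h 1%N = 1 /\ forall m n : nat, (0 < m)%N -> (0 < n)%N -> h (m * n)%N = h m * h n.

Definition s_fun (a : nat) (f g h : arith) (k j : nat) : algC :=
  \sum_(d <- divisors k | (d ^ a %| j)%N) f d * g (k %/ d)%N * h (j %/ d ^ a)%N.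

Definition lcm_fam (n : nat) (k : 'I_n -> nat) : nat := \big[lcmn/1%N]_(i < n) k i.

Definition U_fun (a n : nat) (w : arith) (f g h : 'I_n -> arith) (k : 'I_n -> nat)
  : algC :=
  \sum_(1 <= j < (lcm_fam k) ^ a + 1) w j * \prod_(i < n) s_fun a (f i) (g i) (h i) (k i) j.

(* Main.v *)
Require Import Defs.
From HB Require Import structures.
From mathcomp Require Import all_boot all_order all_algebra all_field.
From mathcomp Require Import zify ring.
Import Order.TTheory GRing.Theory Num.Theory.

Lemma lcmX (a : nat) (a0 : (0 < a)%N) x y : (lcmn x y ^ a = lcmn (x ^ a) (y ^ a))%N.
Proof.
have [->|x0] := posnP x; first by rewrite lcm0n exp0n // lcm0n.
have [->|y0] := posnP y; first by rewrite lcmn0 exp0n // lcmn0.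
set g := gcdn x y.
have g0 : (0 < g)%N by rewrite gcdn_gt0 x0.
have ex : x = (x %/ g * g)%N by rewrite divnK // dvdn_gcdl.
have ey : y = (y %/ g * g)%N by rewrite divnK // dvdn_gcdr.
set x' := x %/ g; set y' := y %/ g.
have cop : coprime x' y'.
  have H := muln_gcdl x' y' g.
  rewrite -ex -ey -/g in H.
  by rewrite /coprime -(eqn_pmul2r g0) mul1n H.
rewrite ex ey.
rewrite -muln_lcml !expnMn -muln_lcml.
have l1 : lcmn x' y' = (x' * y')%N.
  by have := muln_lcm_gcd x' y'; rewrite (eqP cop) muln1.
have l2 : lcmn (x' ^ a) (y' ^ a) = (x' ^ a * y' ^ a)%N.
  have := muln_lcm_gcd (x' ^ a) (y' ^ a).
  by rewrite (eqP (coprimeXr _ (coprimeXl _ cop))) muln1.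
by rewrite l1 l2 expnMn.
Qed.

Local Open Scope ring_scope.
Lemma sum_mult (G : nat -> algC) N T : (0 < N)%N ->
  \sum_(1 <= j < (N * T).+1 | (N %| j)%N) G j = \sum_(1 <= l < T.+1) G (N * l)%N.
Proof.
move=> N0; elim: T => [|T IH]; first by rewrite muln0 !big_geq.
rewrite (@big_cat_nat _ _ _ (N * T).+1) /=; [|by []|by rewrite ltnS mulnS; lia].
rewrite IH [RHS]big_nat_recr /=; last by [].
congr (_ + _).
rewrite big_mkcond big_nat_recr /=; last by rewrite mulnS; lia.
rewrite dvdn_mulr //.
rewrite big_nat_cond big1 ?add0r // => i /andP[/andP[lo hi] _].
case: ifP => // /dvdnP[q eq].
exfalso; move: lo hi; rewrite eq mulnS => lo hi.
have h1 : (T < q)%N by rewrite -(ltn_pmul2r N0); lia.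
have h2 : (q < T.+1)%N by rewrite -(ltn_pmul2r N0); lia.
lia.
Qed.

Lemma s_fun_ord a (f g h : arith) (k K j : nat) : (0 < k)%N -> (k <= K)%N ->
  s_fun a f g h k j = \sum_(d < K.+1 | (d %| k)%N && (d ^ a %| j)%N)
                         f d * g (k %/ d)%N * h (j %/ d ^ a)%N.
Proof.
move=> k0 kK; rewrite /s_fun.
rewrite -(big_mkord (fun d : nat => (d %| k)%N && (d ^ a %| j)%N)
            (fun d => f d * g (k %/ d)%N * h (j %/ d ^ a)%N)).
rewrite /index_iota subn0 -big_filter_cond.
apply: perm_big; apply: uniq_perm; [exact: divisors_uniq|exact: filter_uniq (iota_uniq _ _)|].
move=> d; rewrite mem_filter mem_iota add0n -dvdn_divisors //.
case dk: (d %| k)%N => //=.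
by rewrite ltnS (leq_trans (dvdn_leq k0 dk) kK).
Qed.

Lemma prod_s a n (k : 'I_n -> nat) K (f g h : 'I_n -> arith) j : (0 < a)%N ->
  (forall i, 0 < k i)%N -> (forall i, k i <= K)%N ->
  \prod_(i < n) s_fun a (f i) (g i) (h i) (k i) j =
  \sum_(D : {ffun 'I_n -> 'I_(K.+1)} | [forall i, (D i %| k i)%N])
     (if (lcm_fam (fun i => nat_of_ord (D i)) ^ a %| j)%N then
       \prod_(i < n) (f i (D i) * g i (k i %/ D i)%N * h i (j %/ D i ^ a)%N) else 0).
Proof.
move=> a0 k0 kK.
rewrite (eq_bigr (fun i => \sum_(d < K.+1 | (d %| k i)%N && (d ^ a %| j)%N)
     f i d * g i (k i %/ d)%N * h i (j %/ d ^ a)%N)); last by move=> i _; apply: s_fun_ord.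
rewrite bigA_distr_big_dep.
rewrite -big_mkcondr /=; apply: eq_bigl => D.
rewrite /lcm_fam (big_morph (fun x => x ^ a)%N (@lcmX a a0) (exp1n a)).
apply/familyP/andP => [H | [/forallP H1 /dvdn_biglcmP H2] i].
- have H' : forall i, (D i %| k i)%N && (D i ^ a %| j)%N by move=> i; apply: H.
  split; first by apply/forallP => i; case/andP: (H' i).
  by apply/dvdn_biglcmP => i _; case/andP: (H' i).
- by apply/andP; split; [apply: H1|apply: H2].
Qed.

Lemma hX (h : arith) (hm : completely_multiplicative h) m e : (0 < m)%N -> h (m ^ e)%N = h m ^+ e.
Proof.
case: hm => h1 hM m0; elim: e => [|e IH]; first by rewrite expn0 expr0 h1.
by rewrite expnS exprS hM ?IH // expn_gt0 m0.
Qed.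

Theorem theorem2 (a n : nat) (ha : (0 < a)%N) (hn : (0 < n)%N)
  (k : 'I_n -> nat) (hk : forall i, (0 < k i)%N)
  (f g h : 'I_n -> arith) (w : arith) (hw : completely_additive w) :
  let K := lcm_fam k in
  (U_fun a w f g h k =
     \sum_(d : {ffun 'I_n -> 'I_(K.+1)} | [forall i, (d i %| k i)%N])
        w ((lcm_fam (fun i => nat_of_ord (d i))) ^ a)%N
        * (\prod_(i < n) (f i (d i) * g i (k i %/ d i)%N))
        * \sum_(1 <= l < (K %/ lcm_fam (fun i => nat_of_ord (d i))) ^ a + 1)
            \prod_(i < n) h i ((lcm_fam (fun i => nat_of_ord (d i)) %/ d i) ^ a * l)%N
   + \sum_(d : {ffun 'I_n -> 'I_(K.+1)} | [forall i, (d i %| k i)%N])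
        (\prod_(i < n) (f i (d i) * g i (k i %/ d i)%N))
        * \sum_(1 <= l < (K %/ lcm_fam (fun i => nat_of_ord (d i))) ^ a + 1)
            w l * \prod_(i < n) h i ((lcm_fam (fun i => nat_of_ord (d i)) %/ d i) ^ a * l)%N)
  /\
  ((forall i, completely_multiplicative (h i)) ->
   U_fun a w f g h k =
     \sum_(d : {ffun 'I_n -> 'I_(K.+1)} | [forall i, (d i %| k i)%N])
        w ((lcm_fam (fun i => nat_of_ord (d i))) ^ a)%N
        * (\prod_(i < n) (f i (d i) * g i (k i %/ d i)%N
                          * h i (lcm_fam (fun i => nat_of_ord (d i)) %/ d i)%N ^+ a))
        * \sum_(1 <= l < (K %/ lcm_fam (fun i => nat_of_ord (d i))) ^ a + 1)
            \prod_(i < n) h i l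
   + \sum_(d : {ffun 'I_n -> 'I_(K.+1)} | [forall i, (d i %| k i)%N])
        (\prod_(i < n) (f i (d i) * g i (k i %/ d i)%N
                        * h i (lcm_fam (fun i => nat_of_ord (d i)) %/ d i)%N ^+ a))
        * \sum_(1 <= l < (K %/ lcm_fam (fun i => nat_of_ord (d i))) ^ a + 1)
            w l * \prod_(i < n) h i l).
Proof.
move=> K.
have K0 : (0 < K)%N.
  rewrite /K /lcm_fam; apply: (big_ind (fun x => (0 < x)%N)) => //.
    by move=> x y x0 y0; rewrite lcmn_gt0 x0 y0.
have kK i : (k i %| K)%N by rewrite /K /lcm_fam; apply: (biglcmn_sup i).
have kle i : (k i <= K)%N := dvdn_leq K0 (kK i).
have MP : forall D : {ffun 'I_n -> 'I_K.+1}, [forall i, (D i %| k i)%N] ->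
   [/\ (0 < lcm_fam (fun i => nat_of_ord (D i)))%N,
       (lcm_fam (fun i => nat_of_ord (D i)) %| K)%N,
       forall i, (D i %| lcm_fam (fun i => nat_of_ord (D i)))%N
     & forall i, (0 < D i)%N].
  move=> D /forallP HD; split.
  - apply: (big_ind (fun x => (0 < x)%N)) => //.
      by move=> x y x0 y0; rewrite lcmn_gt0 x0 y0.
    by move=> i _; exact: dvdn_gt0 (hk i) (HD i).
  - by apply/dvdn_biglcmP => i _; exact: dvdn_trans (HD i) (kK i).
  - by move=> i; apply: (biglcmn_sup i).
  - by move=> i; exact: dvdn_gt0 (hk i) (HD i).
suff P1 : U_fun a w f g h k =
     \sum_(d : {ffun 'I_n -> 'I_(K.+1)} | [forall i, (d i %| k i)%N])
        w ((lcm_fam (fun i => nat_of_ord (d i))) ^ a)%N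
        * (\prod_(i < n) (f i (d i) * g i (k i %/ d i)%N))
        * \sum_(1 <= l < (K %/ lcm_fam (fun i => nat_of_ord (d i))) ^ a + 1)
            \prod_(i < n) h i ((lcm_fam (fun i => nat_of_ord (d i)) %/ d i) ^ a * l)%N
   + \sum_(d : {ffun 'I_n -> 'I_(K.+1)} | [forall i, (d i %| k i)%N])
        (\prod_(i < n) (f i (d i) * g i (k i %/ d i)%N))
        * \sum_(1 <= l < (K %/ lcm_fam (fun i => nat_of_ord (d i))) ^ a + 1)
            w l * \prod_(i < n) h i ((lcm_fam (fun i => nat_of_ord (d i)) %/ d i) ^ a * l)%N.
  split; first exact: P1.
  move=> hm.
  have eh : forall D : {ffun 'I_n -> 'I_K.+1}, [forall i, (D i %| k i)%N] ->
     forall l, (0 < l)%N ->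
       \prod_(i < n) h i ((lcm_fam (fun i => nat_of_ord (D i)) %/ D i) ^ a * l)%N =
       \prod_(i < n) h i (lcm_fam (fun i => nat_of_ord (D i)) %/ D i)%N ^+ a
         * \prod_(i < n) h i l.
    move=> D HD l l0; have [M0 MK DM D0] := MP D HD.
    rewrite -big_split; apply: eq_bigr => i _ /=.
    have q0 : (0 < lcm_fam (fun i => nat_of_ord (D i)) %/ D i)%N.
      by rewrite divn_gt0 ?D0 // (dvdn_leq M0 (DM i)).
    case: (hm i) => h1 hM; rewrite hM ?expn_gt0 ?q0 // (@hX _ (hm i)) //.
  rewrite P1; congr (_ + _); apply: eq_bigr => D HD.
  - under eq_big_nat => l /andP[l1 _] do rewrite (eh D HD l l1).
    rewrite [in RHS]big_split /= -!mulrA; congr (_ * (_ * _)).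
    by rewrite mulr_sumr.
  - under eq_big_nat => l /andP[l1 _] do rewrite (eh D HD l l1).
    rewrite [in RHS]big_split /= -mulrA; congr (_ * _); rewrite mulr_sumr; apply: eq_bigr => l _.
    by rewrite mulrCA.
rewrite /U_fun.
under eq_bigr => j _ do rewrite (prod_s _ _ _ _ _ _ _ j ha hk kle) mulr_sumr.
rewrite exchange_big -big_split /=; apply: eq_bigr => D HD.
have [M0 MK DM D0] := MP D HD.
under eq_bigr => j _ do rewrite (fun_if (fun x => w j * x)) mulr0.
rewrite -big_mkcond /=.
have eK : (K ^ a + 1 = ((lcm_fam (fun i => nat_of_ord (D i))) ^ a
                         * (K %/ lcm_fam (fun i => nat_of_ord (D i))) ^ a).+1)%N.
  by rewrite -expnMn mulnC divnK // addn1.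
rewrite eK sum_mult ?expn_gt0 ?M0 // !addn1 !mulr_sumr -big_split /=.
apply: eq_big_nat => l /andP[l1 _].
rewrite hw ?expn_gt0 ?M0 //.
have e : forall i, ((lcm_fam (fun i => nat_of_ord (D i)) ^ a * l) %/ D i ^ a
                   = (lcm_fam (fun i => nat_of_ord (D i)) %/ D i) ^ a * l)%N.
  by move=> i; rewrite -{1}(divnK (DM i)) expnMn mulnAC mulnK // expn_gt0 D0.
rewrite (eq_bigr (fun i => f i (D i) * g i (k i %/ D i)%N
   * h i ((lcm_fam (fun i => nat_of_ord (D i)) %/ D i) ^ a * l)%N)); last by move=> i _; rewrite e.
rewrite big_split /=.
ring.
Qed.
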